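(* Let $A$ be a nonempty finite set, $\Sigma\in\mathbb{R}$, and let $\sigma$ be a $\Sigma$-proximity on $A$. Then for all $x,y\in A$: $\sigma(x,y)=\sigma(y,x)$ (symmetry), and if $x\ne y$ then $\sigma(x,x)>\sigma(x,y)$ (egocentrism).
   Context: For a nonempty finite set $A$ and a real number $\Sigma$, a function $\sigma:A^2\to\mathbb{R}$ is called a $\Sigma$-proximity on $A$ if for all $x,y,z\in A$: (1) (normalization) $\sum_{t\in A}\sigma(x,t)=\Sigma$; (2) (triangle inequality) $\sigma(x,y)+\sigma(x,z)-\sigma(y,z)\le\sigma(x,x)$, and this inequality is strict whenever $z=y$ and $x\ne y$. *)

(* Defs.v *)
From mathcomp Require Import all_boot all_order all_algebra.
Set Implicit Arguments. Unset Strict Implicit. Unset Printing Implicit Defensive.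
Import Order.TTheory GRing.Theory Num.Theory.
Local Open Scope ring_scope.

Definition is_proximity (R : realFieldType) (A : finType) (Sigma : R)
    (sigma : A -> A -> R) : Prop :=
  (forall x : A, \sum_(t : A) sigma x t = Sigma) /\
  (forall x y z : A, sigma x y + sigma x z - sigma y z <= sigma x x) /\
  (forall x y : A, x != y -> sigma x y + sigma x y - sigma y y < sigma x x).

(* Main.v *)
Require Import Defs.
From mathcomp Require Import all_boot all_order all_algebra.
From mathcomp Require Import lra.
Import Order.TTheory GRing.Theory Num.Theory.
Local Open Scope ring_scope.

Theorem proposition1 (R : realFieldType) (A : finType) (a0 : A) (Sigma : R)
    (sigma : A -> A -> R) :
  is_proximity Sigma sigma ->
  forall x y : A, sigma x y = sigma y x /\ (x != y -> sigma x y < sigma x x).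
Proof.
move=> [Hn [Ht Hs]] x y.
have sym : forall u v, sigma u v = sigma v u.
  move=> u v; apply/eqP; rewrite eq_le.
  have h1 := Ht u v u; have h2 := Ht v u v.
  apply/andP; split; lra.
split; first exact: sym.
move=> nxy.
set c := sigma x x - sigma x y.
pose d t := c - sigma x t + sigma y t.
have Hsum : \sum_(t : A) d t = c *+ #|A|.
  by rewrite /d big_split /= sumrB Hn Hn sumr_const subrK.
have pos : 0 < \sum_(t : A) d t.
  rewrite (bigD1 y) //=.
  apply: ltr_wpDr.
    apply: sumr_ge0 => t _; rewrite /d /c.
    have := Ht x y t; rewrite (sym y t); lra.
  rewrite /d /c; have := Hs x y nxy; lra.
rewrite Hsum in pos.
have : 0 < c.
  move: pos; case: #|A| => [|n]; first by rewrite mulr0n ltxx.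
  by rewrite pmulrn_lgt0.
rewrite /c; lra.
Qed.
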